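(* Let $K_1, K_2, K_3 > 0$ and $h_c \in (0,\infty)$, and set $L_j = K_j \tanh(K_j h_c)$ for $j=1,2,3$. Let $\Omega_1 = \sqrt{L_1}$, $\Omega_2 = \sqrt{L_2}$, $\Omega_3 = -\sqrt{L_3}$, and suppose $\Omega_1 + \Omega_2 + \Omega_3 = 0$. Define $$\beta = \sum_{l=1}^3 \Omega_l K_l^2 - \frac{1}{2}\Omega_1\Omega_2\Omega_3\big(\Omega_1^2 + \Omega_2^2 + \Omega_3^2\big).$$ Then $\beta < 0$.
   Context: Here $K_j$ are wavenumbers of three linear wave modes in a cylinder of depth $h_c$, $\Omega_j$ are signed angular frequencies satisfying the finite-depth dispersion relation $\Omega_j^2 = K_j\tanh(K_j h_c)$, and the condition $\Omega_1+\Omega_2+\Omega_3=0$ expresses exact triad resonance at depth $h_c$. The quantity $\beta$ enters the triad interaction coefficients $\alpha_j = \mathscr{C}\beta/(2\Omega_j)$. *)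

(* Defs.v *)
From Stdlib Require Import Reals.
Open Scope R_scope.

(* Main.v *)
Require Import Defs.
From Stdlib Require Import Reals Lra Psatz.
From Coquelicot Require Import Coquelicot.
Open Scope R_scope.

Lemma tanh_bounds x : 0 <= x -> 0 <= tanh x <= 1 /\ (0 < x -> 0 < tanh x < 1)
  /\ 0 <= 1 - tanh x ^ 2 /\ x * (1 - tanh x ^ 2) <= 1.
Proof.
  intros hx.
  assert (hE : 1 + x <= exp x) by (destruct (Req_dec x 0); [subst; rewrite exp_0; lra| left; apply exp_ineq1; lra]).
  assert (hEF : exp x * exp (- x) = 1) by (rewrite <- exp_plus; replace (x + - x) with 0 by ring; apply exp_0).
  assert (hF : 0 < exp (- x)) by apply exp_pos.
  assert (hEp : 0 < exp x) by apply exp_pos.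
  assert (hFE : exp (-x) <= exp x) by (apply exp_le_3 || (destruct (Req_dec x 0); [subst; rewrite Ropp_0; lra| left; apply exp_increasing; lra])).
  assert (ht : tanh x = (exp x - exp (-x)) / (exp x + exp (-x))).
  { unfold tanh, sinh, cosh. field. lra. }
  rewrite ht.
  set (E := exp x) in *. set (F := exp (-x)) in *.
  assert (hs : 0 < E + F) by lra.
  split; [split|split; [|split]].
  - apply Rdiv_le_0_compat; lra.
  - apply Rmult_le_reg_r with (E+F); [lra|]. unfold Rdiv. rewrite Rmult_assoc, Rinv_l; lra.
  - intros hx'. assert (E > 1) by (subst E; rewrite <- exp_0; apply exp_increasing; lra).
    assert (F < E) by nra.
    split; [apply Rdiv_lt_0_compat; lra|].
    apply Rmult_lt_reg_r with (E+F); [lra|]. unfold Rdiv. rewrite Rmult_assoc, Rinv_l; lra.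
  - replace (1 - ((E - F) / (E + F)) ^ 2) with (4 * (E * F) / (E+F)^2) by (field; lra).
    apply Rdiv_le_0_compat; nra.
  - replace (x * (1 - ((E - F) / (E + F)) ^ 2)) with (4 * x * (E * F) / (E+F)^2) by (field; lra).
    rewrite hEF.
    apply Rmult_le_reg_r with ((E+F)^2); [nra|]. unfold Rdiv. rewrite Rmult_assoc, Rinv_l; nra.
Qed.

Lemma f_deriv h k : is_derive (fun k => k * tanh (k * h)) k
   (tanh (k*h) + k * h * (1 - tanh (k*h) ^ 2)).
Proof.
  unfold tanh, sinh, cosh. auto_derive.
  - assert (0 < exp (k*h) + exp (-(k*h))) by (pose proof (exp_pos (k*h)); pose proof (exp_pos (-(k*h))); lra). lra.
  - assert (0 < exp (k*h) + exp (-(k*h))) by (pose proof (exp_pos (k*h)); pose proof (exp_pos (-(k*h))); lra).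
    assert (exp (k*h) * exp (-(k*h)) = 1) by (rewrite <- exp_plus; replace (k*h + - (k*h)) with 0 by ring; apply exp_0).
    field. lra.
Qed.

Lemma f_lip h x y : 0 < h -> 0 < x -> x <= y ->
  0 <= y * tanh (y*h) - x * tanh (x*h) <= 2 * (y - x).
Proof.
  intros hh hx hxy.
  destruct (MVT_gen (fun k => k * tanh (k * h)) x y
    (fun k => tanh (k*h) + k * h * (1 - tanh (k*h) ^ 2))) as [c [hc e]].
  - intros; apply f_deriv.
  - intros z _. apply continuity_pt_filterlim. apply (ex_derive_continuous (fun k => k * tanh (k*h)) z). eexists. apply f_deriv.
  - cbv beta in e. rewrite e.
    rewrite Rmin_left, Rmax_right in hc by lra.
    assert (0 <= c * h) by nra.
    destruct (tanh_bounds (c*h) H) as [[t0 t1] [_ [u0 u1]]].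
    replace (c * h * (1 - tanh (c * h) ^ 2)) with ((c*h) * (1 - tanh (c * h) ^ 2)) by ring.
    set (d := tanh (c * h) + c * h * (1 - tanh (c * h) ^ 2)).
    assert (0 <= d <= 2) by (unfold d; split; nra).
    split; nra.
Qed.

Theorem mainTheorem2 (K1 K2 K3 hc : R)
  (hK1 : 0 < K1) (hK2 : 0 < K2) (hK3 : 0 < K3) (hhc : 0 < hc) :
  let L1 := K1 * tanh (K1 * hc) in
  let L2 := K2 * tanh (K2 * hc) in
  let L3 := K3 * tanh (K3 * hc) in
  let O1 := sqrt L1 in
  let O2 := sqrt L2 in
  let O3 := - sqrt L3 in
  O1 + O2 + O3 = 0 ->
  let beta := (O1 * K1 ^ 2 + O2 * K2 ^ 2 + O3 * K3 ^ 2)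
              - / 2 * O1 * O2 * O3 * (O1 ^ 2 + O2 ^ 2 + O3 ^ 2) in
  beta < 0.
Proof.
  intros L1 L2 L3 O1 O2 O3 Hs beta.
  assert (tb : forall K, 0 < K -> 0 < tanh (K*hc) < 1).
  { intros K hK. apply (tanh_bounds (K*hc)); nra. }
  destruct (tb K1 hK1) as [t1a t1b]. destruct (tb K2 hK2) as [t2a t2b].
  destruct (tb K3 hK3) as [t3a t3b].
  assert (hL1 : 0 < L1 < K1) by (unfold L1; split; nra).
  assert (hL2 : 0 < L2 < K2) by (unfold L2; split; nra).
  assert (hL3 : 0 < L3 < K3) by (unfold L3; split; nra).
  set (a := sqrt L1) in *. set (b := sqrt L2) in *. set (c := sqrt L3) in *.
  assert (ha : a * a = L1) by (apply sqrt_sqrt; lra).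
  assert (hb : b * b = L2) by (apply sqrt_sqrt; lra).
  assert (hcc : c * c = L3) by (apply sqrt_sqrt; lra).
  assert (a0 : 0 < a) by (apply sqrt_lt_R0; lra).
  assert (b0 : 0 < b) by (apply sqrt_lt_R0; lra).
  unfold O1, O2, O3 in Hs. fold a b c in Hs.
  assert (ec : c = a + b) by lra.
  assert (key : forall K a', 0 < K -> 0 < a' -> a' < c -> a' * a' = K * tanh (K * hc) ->
     K3 ^ 2 - K ^ 2 > (c ^ 4 - a' ^ 4) / 5).
  { intros K a' hK ha' hac he.
    destruct (tb K hK).
    assert (hlt : K * tanh (K*hc) < L3) by nra.
    assert (KK : K < K3).
    { destruct (Rlt_or_le K K3) as [|hle]; [assumption|].
      pose proof (f_lip hc K3 K hhc hK3 hle). unfold L3 in hlt. lra. }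
    pose proof (f_lip hc K K3 hhc hK (Rlt_le _ _ KK)).
    fold L3 in H1.
    assert (c^4 - a'^4 = (L3 - K * tanh (K*hc)) * (L3 + K * tanh (K*hc))) by (rewrite <- he, <- hcc; ring).
    rewrite H2.
    assert (L3 + K * tanh (K*hc) < K3 + K) by nra.
    nra. }
  assert (k1 := key K1 a hK1 a0 ltac:(lra) ha).
  assert (k2 := key K2 b hK2 b0 ltac:(lra) hb).
  unfold beta, O1, O2, O3. fold a b c.
  change (sqrt L3) with c. rewrite ec in *.
  assert (p1 := Rmult_lt_compat_l a _ _ a0 k1).
  assert (p2 := Rmult_lt_compat_l b _ _ b0 k2).
  match goal with |- ?g < 0 =>
  replace g with (- (a*(K3^2-K1^2) + b*(K3^2-K2^2)) + (a*(((a+b)^4 - a^4)/5) + b*(((a+b)^4-b^4)/5))) by (field) end.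
  lra.
Qed.
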